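(* Consider the inner product on the parabola $y=x^2$ $$\langle f,g\rangle=\int_{\mathbb R}f(x,x^2)\,g(x,x^2)\,e^{-x^2}\,dx .$$ For $n\ge1$, the polynomials $$Y_{n,1}(x,y)=L_n^{-\frac12}(y),\qquad Y_{n,2}(x,y)=x\,L_{n-1}^{\frac12}(y)$$ form an orthogonal basis of $\mathcal H_n$, where $L_n^{\alpha}$ are the Laguerre polynomials. Moreover, both $u=Y_{n,1}$ and $u=Y_{n,2}$ satisfy $$x\,\partial_x\partial_y u+y\,\partial_y^2u+\big(\tfrac12-y\big)\partial_yu-x\,\partial_xu=-n\,u .$$
   Context: $L_n^{\alpha}$ denotes the Laguerre polynomial of degree $n$, orthogonal with respect to $t^{\alpha}e^{-t}$ on $[0,\infty)$. $\mathcal H_n$ denotes the space of polynomials $P$ of degree $n$ in two variables with $\langle P,Q\rangle=0$ for all polynomials $Q$ of degree $<n$ and $\langle P,P\rangle>0$, considered modulo the ideal $\langle y-x^2\rangle$; it has dimension 2 for $n\ge 1$. *)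

(* Defs.v *)
From Stdlib Require Import Reals Arith Factorial.
Open Scope R_scope.

Fixpoint falling (r : R) (m : nat) : R :=
  match m with
  | O => 1
  | S m' => falling r m' * (r - INR m')
  end.

Definition gbinom (r : R) (m : nat) : R := falling r m / INR (fact m).

(* Laguerre polynomial L_n^a(t) = sum_{k=0}^n (-1)^k binom(n+a, n-k) t^k / k! ,
   orthogonal w.r.t. t^a e^{-t} on [0,oo) (a > -1). *)
Definition laguerre (n : nat) (a : R) (t : R) : R :=
  sum_f_R0 (fun k => (-1) ^ k * gbinom (INR n + a) (n - k) * t ^ k / INR (fact k)) n.

Definition poly2_le (n : nat) (f : R -> R -> R) : Prop :=
  exists c : nat -> nat -> R, forall x y : R,
    f x y = sum_f_R0 (fun i => sum_f_R0 (fun j =>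
              if Nat.leb (i + j) n then c i j * x ^ i * y ^ j else 0) n) n.

Definition poly2 (f : R -> R -> R) : Prop := exists d : nat, poly2_le d f.

Definition poly2_deg (n : nat) (f : R -> R -> R) : Prop :=
  poly2_le n f /\ ~ poly2_le (n - 1) f.

Definition integral_R (h : R -> R) (l : R) : Prop :=
  forall eps : R, eps > 0 -> exists M : R, forall a b : R, a <= - M -> M <= b ->
    exists pr : Riemann_integrable h a b, Rabs (RiemannInt pr - l) < eps.

Definition ip (f g : R -> R -> R) (l : R) : Prop :=
  integral_R (fun x => f x (x ^ 2) * g x (x ^ 2) * exp (- x ^ 2)) l.

(* Membership in H_n as defined in the paper (a representative polynomial). *)
Definition in_Hn (n : nat) (P : R -> R -> R) : Prop :=
  poly2_deg n P /\
  (forall Q, poly2_le (n - 1) Q -> ip P Q 0) /\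
  (exists l, ip P P l /\ l > 0).

Definition cong_par (P Q : R -> R -> R) : Prop :=
  exists S, poly2 S /\ forall x y, P x y - Q x y = (y - x ^ 2) * S x y.

(* Main.v *)
Require Import Defs.
From Stdlib Require Import Reals.
From Stdlib Require Import Lra Lia Factorial Classical.
From Coquelicot Require Import Coquelicot.
Open Scope R_scope.

Definition Lim2 (F : R -> R -> R) (l : R) := forall eps, eps > 0 ->
  exists M, forall a b, a <= -M -> M <= b -> Rabs (F a b - l) < eps.

Lemma Lim2_ext F G l : (forall a b, F a b = G a b) -> Lim2 F l -> Lim2 G l.
Proof. intros E H eps He; destruct (H eps He) as [M HM]; exists M; intros a b Ha Hb; rewrite <- E; auto. Qed.

Lemma Lim2_plus F G l1 l2 : Lim2 F l1 -> Lim2 G l2 -> Lim2 (fun a b => F a b + G a b) (l1+l2).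
Proof.
  intros HF HG eps He. destruct (HF (eps/2)) as [M1 H1]; [lra|].
  destruct (HG (eps/2)) as [M2 H2]; [lra|]. exists (Rmax M1 M2). intros a b Ha Hb.
  generalize (Rmax_l M1 M2) (Rmax_r M1 M2); intros.
  assert (A1 := H1 a b ltac:(lra) ltac:(lra)). assert (A2 := H2 a b ltac:(lra) ltac:(lra)).
  replace (F a b + G a b - (l1+l2)) with ((F a b - l1) + (G a b - l2)) by ring.
  eapply Rle_lt_trans; [apply Rabs_triang|]. lra.
Qed.

Lemma Lim2_scal F l c : Lim2 F l -> Lim2 (fun a b => c * F a b) (c*l).
Proof.
  intros HF eps He. assert (Hc : 0 <= Rabs c) by apply Rabs_pos.
  destruct (HF (eps/(Rabs c + 1))) as [M HM].
  { apply Rdiv_lt_0_compat; lra. }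
  exists M; intros a b Ha Hb. specialize (HM a b Ha Hb).
  replace (c * F a b - c * l) with (c * (F a b - l)) by ring. rewrite Rabs_mult.
  apply Rle_lt_trans with (Rabs c * (eps / (Rabs c + 1))).
  { apply Rmult_le_compat_l; lra. }
  replace (Rabs c * (eps / (Rabs c + 1))) with (eps * (Rabs c / (Rabs c + 1))) by (field; lra).
  assert (Rabs c / (Rabs c + 1) < 1). { apply (Rmult_lt_reg_r (Rabs c + 1)); [lra|].
    unfold Rdiv; rewrite Rmult_assoc, Rinv_l; lra. }
  assert (0 <= Rabs c / (Rabs c + 1)) by (apply Rmult_le_pos; [lra| left; apply Rinv_0_lt_compat; lra]).
  nra.
Qed.

Lemma Lim2_const l : Lim2 (fun _ _ => l) l.
Proof. intros eps He; exists 0; intros; rewrite Rminus_diag, Rabs_R0; lra. Qed.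

Lemma Lim2_unique F l1 l2 : Lim2 F l1 -> Lim2 F l2 -> l1 = l2.
Proof.
  intros H1 H2. destruct (Req_dec l1 l2) as [|Hne]; auto.
  assert (Hp : Rabs (l1 - l2) > 0) by (apply Rabs_pos_lt; lra).
  destruct (H1 (Rabs (l1-l2)/2)) as [M1 A1]; [lra|].
  destruct (H2 (Rabs (l1-l2)/2)) as [M2 A2]; [lra|].
  set (M := Rmax M1 M2). generalize (Rmax_l M1 M2) (Rmax_r M1 M2); intros.
  specialize (A1 (-M) M ltac:(unfold M; lra) ltac:(unfold M; lra)).
  specialize (A2 (-M) M ltac:(unfold M; lra) ltac:(unfold M; lra)).
  assert (Rabs (l1 - l2) <= Rabs (F (-M) M - l2) + Rabs (F (-M) M - l1)).
  { replace (l1 - l2) with ((F (-M) M - l2) - (F (-M) M - l1)) by ring.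
    eapply Rle_trans; [apply Rabs_triang|]. rewrite Rabs_Ropp; lra. }
  lra.
Qed.

Definition decay (phi : R -> R) := forall eps, eps > 0 ->
  exists M, forall x, M <= Rabs x -> Rabs (phi x) < eps.

Lemma Lim2_bd phi : decay phi -> Lim2 (fun a b => phi b - phi a) 0.
Proof.
  intros H eps He. destruct (H (eps/2)) as [M HM]; [lra|].
  exists (Rmax M 0). intros a b Ha Hb. generalize (Rmax_l M 0) (Rmax_r M 0); intros.
  assert (A1 := HM b ltac:(rewrite Rabs_pos_eq; lra)).
  assert (A2 := HM a ltac:(rewrite Rabs_left1; lra)).
  rewrite Rminus_0_r. unfold Rminus. eapply Rle_lt_trans; [apply Rabs_triang|].
  rewrite Rabs_Ropp; lra.
Qed.

Lemma exp_ge_pow (t : R) (N : nat) : 0 <= t -> t ^ N / INR (fact N) <= exp t.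
Proof.
  intros Ht. eapply Rle_trans; [|apply (exp_ge_taylor t N Ht)].
  destruct N as [|N]. { simpl. lra. }
  change (sum_f_R0 (fun k : nat => t ^ k / INR (fact k)) (S N)) with
    (sum_f_R0 (fun k : nat => t ^ k / INR (fact k)) N + t ^ S N / INR (fact (S N))).
  assert (0 <= sum_f_R0 (fun k : nat => t ^ k / INR (fact k)) N).
  { apply cond_pos_sum. intros k. apply Rmult_le_pos. apply pow_le; auto.
    left; apply Rinv_0_lt_compat, lt_0_INR, lt_O_fact. }
  lra.
Qed.

Lemma decay_mon (j : nat) : decay (fun x => x ^ j * exp (- x ^ 2)).
Proof.
  intros eps He. set (K := INR (fact (S j))).
  assert (HK : 0 < K) by apply lt_0_INR, lt_O_fact.
  exists (K / eps + 1). intros x Hx.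
  assert (HKe : 0 <= K / eps) by (apply Rmult_le_pos; [lra| left; apply Rinv_0_lt_compat; lra]).
  set (A := Rabs x) in *. set (E := exp (x^2)).
  assert (HE : 0 < E) by apply exp_pos.
  assert (HA1 : 1 <= A) by lra.
  rewrite Rabs_mult, <- RPow_abs, (Rabs_pos_eq (exp _)) by (left; apply exp_pos).
  rewrite exp_Ropp. fold A. fold E.
  assert (H1 : A ^ (S j) <= A ^ (2 * S j)) by (apply Rle_pow; [lra| lia]).
  assert (H2 : A ^ (2 * S j) = (x^2) ^ (S j)) by (rewrite pow_mult; unfold A; rewrite pow2_abs; auto).
  assert (H3 : (x^2) ^ (S j) / K <= E) by (apply exp_ge_pow; nra).
  assert (H4 : A ^ (S j) <= K * E).
  { rewrite H2 in H1. apply (Rmult_le_compat_l K) in H3; [|lra].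
    unfold Rdiv in H3. rewrite (Rmult_comm ((x^2)^(S j))), <- Rmult_assoc, Rinv_r in H3; lra. }
  simpl in H4.
  assert (H5 : A ^ j * / E * A <= K).
  { apply (Rmult_le_reg_r E); auto. replace (A ^ j * / E * A * E) with (A * A^j) by (field; lra). lra. }
  assert (H6 : K < eps * A).
  { assert (K / eps < A) by lra. apply (Rmult_lt_compat_l eps) in H; [|lra].
    replace (eps * (K / eps)) with K in H by (field; lra). lra. }
  assert (0 <= A ^ j * / E) by (apply Rmult_le_pos; [apply pow_le; lra| left; apply Rinv_0_lt_compat; lra]).
  nra.
Qed.

Definition LI (f : R -> R) (l : R) := (forall a b, ex_RInt f a b) /\ Lim2 (fun a b => RInt f a b) l.

Lemma LI_ext f g l : (forall x, f x = g x) -> LI f l -> LI g l.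
Proof.
  intros E [H1 H2]; split.
  - intros a b; apply (ex_RInt_ext f); auto.
  - apply (Lim2_ext (fun a b => RInt f a b)); auto. intros a b; apply RInt_ext; auto.
Qed.

Lemma LI_plus f g l1 l2 : LI f l1 -> LI g l2 -> LI (fun x => f x + g x) (l1 + l2).
Proof.
  intros [F1 F2] [G1 G2]; split.
  - intros a b; apply (ex_RInt_plus f g); auto.
  - apply (Lim2_ext (fun a b => RInt f a b + RInt g a b)).
    + intros a b. symmetry. apply (RInt_plus f g); auto.
    + apply Lim2_plus; auto.
Qed.

Lemma LI_scal f l c : LI f l -> LI (fun x => c * f x) (c * l).
Proof.
  intros [F1 F2]; split.
  - intros a b; apply (ex_RInt_scal f); auto.
  - apply (Lim2_ext (fun a b => c * RInt f a b)).
    + intros a b. symmetry. apply (RInt_scal f); auto.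
    + apply Lim2_scal; auto.
Qed.

Lemma LI_zero : LI (fun _ => 0) 0.
Proof.
  split.
  - intros a b. apply ex_RInt_const.
  - apply (Lim2_ext (fun _ _ => 0)); [|apply Lim2_const].
    intros a b. rewrite RInt_const. unfold scal; simpl; unfold mult; simpl; ring.
Qed.

Lemma LI_sum (F : nat -> R -> R) (v : nat -> R) d :
  (forall k, LI (F k) (v k)) -> LI (fun x => sum_f_R0 (fun k => F k x) d) (sum_f_R0 v d).
Proof.
  intros H. induction d; simpl.
  - apply (LI_ext (F 0%nat)); auto.
  - apply LI_plus; auto.
Qed.

Lemma LI_unique f l1 l2 : LI f l1 -> LI f l2 -> l1 = l2.
Proof. intros [_ A] [_ B]; eapply Lim2_unique; eauto. Qed.

Definition ge (x : R) := exp (- x^2).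
Definition mon (j : nat) (x : R) := x ^ j * exp (- x ^ 2).

Lemma cont_mon j x : continuous (mon j) x.
Proof. apply (@ex_derive_continuous R_AbsRing R_NormedModule); unfold mon; auto_derive; easy. Qed.
Lemma ex_mon j a b : ex_RInt (mon j) a b.
Proof. apply (@ex_RInt_continuous R_CompleteNormedModule); intros; apply cont_mon. Qed.
Lemma ex_ge a b : ex_RInt ge a b.
Proof. apply (ex_RInt_ext (mon 0)); [intros; unfold mon, ge; simpl; ring| apply ex_mon]. Qed.

Lemma ge_bound b : 0 <= b -> RInt ge 0 b <= exp 1 / 2.
Proof.
  intros Hb.
  pose (g := fun x => - exp (1-2*x)/2).
  assert (Hr : is_RInt (fun x => exp (1 - 2*x)) 0 b (minus (g b) (g 0))).
  { apply (@is_RInt_derive R_CompleteNormedModule g).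
    - intros x _. unfold g. auto_derive; [easy| ]. replace (1 + - (2*x)) with (1 - 2*x) by ring; field.
    - intros x _. apply (@ex_derive_continuous R_AbsRing R_NormedModule); auto_derive; easy. }
  apply (@is_RInt_unique R_CompleteNormedModule) in Hr.
  apply Rle_trans with (RInt (fun x => exp (1-2*x)) 0 b).
  - apply RInt_le; auto. apply ex_ge.
    + apply (@ex_RInt_continuous R_CompleteNormedModule); intros; apply (@ex_derive_continuous R_AbsRing R_NormedModule); auto_derive; easy.
    + intros x _. unfold ge. assert (H: -x^2 <= 1 - 2*x) by (assert (0 <= (x-1)*(x-1)) by apply Rle_0_sqr; simpl; nra).
      destruct H as [H|H]; [left; apply exp_increasing; auto| rewrite H; lra].
  - rewrite Hr. unfold g, minus, plus, opp; simpl. replace (1 - 2*0) with 1 by ring.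
    assert (0 < exp (1 - 2*b)) by apply exp_pos. lra.
Qed.

Lemma gauss_exists : exists M, LI ge M.
Proof.
  set (F := fun b => RInt ge 0 b).
  set (E := fun y => exists b, 0 <= b /\ y = F b).
  assert (HB : bound E). { exists (exp 1 / 2). intros y [b [Hb ->]]. apply ge_bound; auto. }
  assert (HE : exists y, E y). { exists (F 0). exists 0. split; [lra|auto]. }
  destruct (completeness E HB HE) as [M0 [Hub Hlub]].
  assert (Fmono : forall b b', 0 <= b <= b' -> F b <= F b').
  { intros b b' Hbb. unfold F. rewrite <- (RInt_Chasles ge 0 b b') by apply ex_ge.
    assert (0 <= RInt ge b b') by (apply RInt_ge_0; [lra|apply ex_ge| intros; left; apply exp_pos]).
    unfold plus; simpl. lra. }
  assert (Hconv : forall eps, eps > 0 -> exists B, 0 <= B /\ forall b, B <= b -> Rabs (F b - M0) < eps).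
  { intros eps He. destruct (classic (exists b0, 0 <= b0 /\ F b0 > M0 - eps)) as [[b0 [Hb0 Hf]]|Hn].
    - exists b0. split; auto. intros b Hb. assert (F b <= M0) by (apply Hub; exists b; split; auto; lra).
      assert (F b0 <= F b) by (apply Fmono; lra). rewrite Rabs_left1 by lra. lra.
    - exfalso. assert (M0 <= M0 - eps).
      { apply Hlub. intros y [b [Hb ->]]. apply Rnot_lt_le. intro. apply Hn. exists b. split; auto; lra. }
      lra. }
  assert (Hsym : forall a, RInt ge a 0 = F (-a)).
  { intros a. unfold F.
    assert (H := RInt_comp_lin ge (-1) 0 a 0 (ex_ge _ _)).
    rewrite (RInt_ext (fun y => scal (-1) (ge (-1*y+0))) (fun y => scal (-1) (ge y))) in H.
    2:{ intros x _. unfold ge. replace ((-1*x+0)^2) with (x^2) by ring. reflexivity. }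
    rewrite (RInt_scal (V:=R_CompleteNormedModule) ge) in H by apply ex_ge.
    replace (-1*a+0) with (-a) in H by ring. replace (-1*0+0) with 0 in H by ring.
    rewrite <- (opp_RInt_swap ge 0 (-a)) in H by apply ex_ge.
    unfold scal, opp in H; simpl in H; unfold mult in H; simpl in H. lra. }
  exists (2 * M0). split; [apply ex_ge|].
  intros eps He. destruct (Hconv (eps/2)) as [B [HB0 HBB]]; [lra|].
  exists B. intros a b Ha Hb.
  rewrite <- (RInt_Chasles ge a 0 b) by apply ex_ge. unfold plus; simpl. rewrite Hsym.
  assert (A1 := HBB (-a) ltac:(lra)). assert (A2 := HBB b Hb).
  replace (F (-a) + RInt ge 0 b - 2 * M0) with ((F (-a) - M0) + (F b - M0)) by (unfold F; ring).
  eapply Rle_lt_trans; [apply Rabs_triang|]. lra.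
Qed.

Fixpoint mom (M : R) (j : nat) : R :=
  match j with O => M | S O => 0 | S (S k) => (INR k + 1) / 2 * mom M k end.

Lemma decay_scal phi c : decay phi -> decay (fun x => c * phi x).
Proof.
  intros H eps He. destruct (H (eps / (Rabs c + 1))) as [M HM].
  { apply Rdiv_lt_0_compat; [lra| generalize (Rabs_pos c); lra]. }
  exists M. intros x Hx. specialize (HM x Hx). rewrite Rabs_mult.
  assert (0 <= Rabs c) by apply Rabs_pos. assert (0 <= Rabs (phi x)) by apply Rabs_pos.
  apply Rle_lt_trans with (Rabs c * (eps / (Rabs c + 1))). { apply Rmult_le_compat_l; lra. }
  replace (Rabs c * (eps / (Rabs c + 1))) with (eps - eps / (Rabs c + 1)) by (field; lra).
  assert (0 < eps / (Rabs c + 1)) by (apply Rdiv_lt_0_compat; lra). lra.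
Qed.

Lemma LI_m1 : LI (mon 1) 0.
Proof.
  split; [apply ex_mon|].
  set (psi := fun x => (-1/2) * (x^0 * exp (- x^2))).
  apply (Lim2_ext (fun a b => psi b - psi a)).
  - intros a b. symmetry. apply (@is_RInt_unique R_CompleteNormedModule).
    apply (@is_RInt_derive R_CompleteNormedModule psi (mon 1)).
    + intros x _. unfold psi, mon. auto_derive; [easy| simpl; field].
    + intros; apply cont_mon.
  - apply Lim2_bd. unfold psi. apply decay_scal, decay_mon.
Qed.

Lemma LI_rec j v : LI (mon j) v -> LI (mon (S (S j))) ((INR j + 1) / 2 * v).
Proof.
  intros [H1 H2]. split; [apply ex_mon|].
  set (phi := fun x => x^(S j) * exp (-x^2)).
  assert (Hf : forall a b, RInt (mon (S (S j))) a b = (INR j + 1)/2 * RInt (mon j) a b + (-1/2) * (phi b - phi a)).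
  { intros a b.
    assert (Hd : is_RInt (fun x => INR (S j) * mon j x - 2 * mon (S (S j)) x) a b (minus (phi b) (phi a))).
    { apply (@is_RInt_derive R_CompleteNormedModule).
      - intros x _. unfold phi, mon. auto_derive; [easy|].
        change (match j with 0%nat => 1 | S _ => INR j + 1 end) with (INR (S j)). simpl. ring.
      - intros x _. apply (@ex_derive_continuous R_AbsRing R_NormedModule). unfold mon; auto_derive; easy. }
    apply (@is_RInt_unique R_CompleteNormedModule) in Hd.
    rewrite (RInt_minus (fun x => INR (S j) * mon j x) (fun x => 2 * mon (S (S j)) x)) in Hd.
    2: apply (ex_RInt_scal (mon j)), ex_mon.
    2: apply (ex_RInt_scal (mon (S (S j)))), ex_mon.
    rewrite (RInt_scal (mon j)) in Hd by apply ex_mon.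
    rewrite (RInt_scal (mon (S (S j)))) in Hd by apply ex_mon.
    unfold minus, plus, opp, scal in Hd; simpl in Hd; unfold mult in Hd; simpl in Hd.
    change (match j with 0%nat => 1 | S _ => INR j + 1 end) with (INR (S j)) in Hd. rewrite S_INR in Hd. generalize dependent (RInt (mon j) a b). intros R1 Hd. generalize dependent (RInt (mon (S (S j))) a b). intros R2 Hd. generalize dependent (INR j). intros u Hd. change R in R1, R2. replace ((u + 1) / 2 * R1) with (((u+1)*R1)/2) by field. generalize dependent ((u+1)*R1). intros X Hd. lra. }
  apply (Lim2_ext (fun a b => (INR j + 1)/2 * RInt (mon j) a b + (-1/2) * (phi b - phi a))).
  { intros; symmetry; apply Hf. }
  replace ((INR j + 1) / 2 * v) with ((INR j + 1) / 2 * v + (-1/2) * 0) by ring.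
  apply Lim2_plus.
  - apply Lim2_scal; exact H2.
  - apply Lim2_scal. apply Lim2_bd. unfold phi. apply (decay_mon (S j)).
Qed.

Lemma mom_SS_gen M j : mom M (S (S j)) = (INR j + 1) / 2 * mom M j.
Proof. reflexivity. Qed.

Lemma mom_step M j : LI (mon j) (mom M j) -> LI (mon (S (S j))) (mom M (S (S j))).
Proof.
      intros A. assert (E : mom M (S (S j)) = (INR j + 1) / 2 * mom M j) by reflexivity.
      rewrite E. exact (LI_rec j (mom M j) A). 
Qed.
Lemma mom_base1 M : LI (mon 1) (mom M 1).
Proof. exact LI_m1. Qed.
Lemma mom_base0 M : LI ge M -> LI (mon 0) (mom M 0).
Proof. intros HM. apply (LI_ext ge). 2: exact HM. intros x; unfold mon, ge. rewrite pow_O, Rmult_1_l. reflexivity. Qed.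
Lemma moments : exists M, forall j, LI (mon j) (mom M j).
Proof.
  destruct gauss_exists as [M HM]. exists M. 
  assert (forall j, LI (mon j) (mom M j) /\ LI (mon (S j)) (mom M (S j))).
  { induction j.
    - split. apply mom_base0; exact HM. apply mom_base1.
    - destruct IHj as [A B]. split. exact B. apply mom_step; exact A. }
  intros j; exact (proj1 (H j)).
Qed.

Lemma mom_odd M k : mom M (S (2 * k)) = 0.
Proof.
  induction k. reflexivity.
  replace (S (2 * S k)) with (S (S (S (2 * k)))) by lia.
  rewrite (mom_SS_gen M (S (2*k))). rewrite IHk. ring.
Qed.

Fixpoint rising (x : R) (p : nat) : R :=
  match p with O => 1 | S p' => rising x p' * (x + INR p') end.

Lemma rising_S x p : rising x (S p) = x * rising (x+1) p.
Proof.
  induction p.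
  - simpl. ring.
  - change (rising x (S (S p))) with (rising x (S p) * (x + INR (S p))).
    rewrite IHp. simpl rising. rewrite S_INR. ring.
Qed.

Fixpoint dlt (n : nat) (f : nat -> R) : Prop :=
  match n with O => forall k, f k = 0 | S n' => dlt n' (fun k => f (S k) - f k) end.

Lemma dlt_ext n : forall f g, (forall k, f k = g k) -> dlt n f -> dlt n g.
Proof.
  induction n; simpl; intros f g E H.
  - intros k; rewrite <- E; auto.
  - apply (IHn (fun k => f (S k) - f k)); auto. intros k; rewrite !E; auto.
Qed.

Lemma dlt_scal n : forall f c, dlt n f -> dlt n (fun k => c * f k).
Proof.
  induction n; simpl; intros f c H.
  - intros k; rewrite H; ring.
  - apply (dlt_ext n (fun k => c * (f (S k) - f k))). intros; ring. apply IHn; auto.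
Qed.

Lemma dlt_S n : forall f, dlt n f -> dlt (S n) f.
Proof.
  induction n; intros f H.
  - simpl. simpl in H. intros k; rewrite !H; ring.
  - exact (IHn _ H).
Qed.

Lemma dlt_le n m f : dlt n f -> (n <= m)%nat -> dlt m f.
Proof. intros H Hle. induction Hle; auto. apply dlt_S; auto. Qed.

Lemma dlt_rising p : forall c, dlt (S p) (fun k => rising (INR k + c) p).
Proof.
  induction p; intros c.
  - simpl. intros k. ring.
  - change (dlt (S p) (fun k => rising (INR (S k) + c) (S p) - rising (INR k + c) (S p))).
    apply (dlt_ext (S p) (fun k => INR (S p) * rising (INR k + (c + 1)) p)).
    + intros k. rewrite (S_INR k). replace (INR k + 1 + c) with (INR k + c + 1) by ring.
      rewrite (rising_S (INR k + c) p).
      change (rising (INR k + c + 1) (S p)) with (rising (INR k + c + 1) p * (INR k + c + 1 + INR p)).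
      replace (INR k + (c + 1)) with (INR k + c + 1) by ring. rewrite S_INR. ring.
    + apply dlt_scal. apply IHp.
Qed.

Fixpoint bn (n k : nat) : R :=
  match n, k with
  | _, O => 1
  | O, S _ => 0
  | S n', S k' => bn n' k' + bn n' (S k')
  end.

Lemma bn_gt n : forall k, (n < k)%nat -> bn n k = 0.
Proof.
  induction n; intros k Hk; destruct k; try lia; simpl; auto.
  rewrite !IHn by lia. ring.
Qed.

Lemma sum_neg (A : nat -> R) n : sum_f_R0 (fun i => - A i) n = - sum_f_R0 A n.
Proof. induction n; simpl; [|rewrite IHn]; ring. Qed.

Definition asum n f := sum_f_R0 (fun k => (-1)^k * bn n k * f k) n.

Lemma asum_S n f : asum (S n) f = - asum n (fun k => f (S k) - f k).
Proof.
  unfold asum.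
  set (G := fun k => (-1)^k * bn n k * f k).
  assert (E1 : sum_f_R0 G (S n) = G 0%nat + sum_f_R0 (fun k => G (S k)) n).
  { rewrite (decomp_sum G (S n)) by lia. reflexivity. }
  assert (E2 : sum_f_R0 G (S n) = sum_f_R0 G n).
  { simpl. unfold G at 2. rewrite bn_gt by lia. ring. }
  rewrite decomp_sum by lia. simpl pred.
  rewrite (sum_eq (fun i => (-1) ^ S i * bn (S n) (S i) * f (S i))
     (fun i => - ((-1)^i * bn n i * f (S i)) + G (S i))).
  2: { intros i _. unfold G. simpl. ring. }
  rewrite sum_plus. rewrite sum_neg.
  rewrite (sum_eq (fun k => (-1)^k * bn n k * (f (S k) - f k)) (fun k => (-1)^k * bn n k * f (S k) + - G k)).
  2: { intros; unfold G; ring. }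
  rewrite sum_plus, sum_neg.
  assert (G 0%nat = f 0%nat) by (unfold G; simpl; destruct n; simpl; ring).
  assert (bn (S n) 0 = 1) by (simpl; auto).
  simpl pow. rewrite H0.
  lra.
Qed.

Lemma asum_dlt n : forall f, dlt n f -> asum n f = 0.
Proof.
  induction n; intros f H.
  - unfold asum. simpl. simpl in H. rewrite H. ring.
  - rewrite asum_S. simpl in H. rewrite IHn; auto. ring.
Qed.

Lemma bn_fact n : forall k, (k <= n)%nat -> bn n k * INR (fact k) * INR (fact (n - k)) = INR (fact n).
Proof.
  induction n; intros k Hk.
  - destruct k; [|lia]. simpl. ring.
  - destruct k.
    + change (bn (S n) 0) with 1. change (fact 0) with 1%nat. rewrite Nat.sub_0_r. change (INR 1) with 1. ring.
    + simpl bn. replace (S n - S k)%nat with (n - k)%nat by lia.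
      destruct (Nat.eq_dec k n) as [->|Hkn].
      * rewrite (bn_gt n (S n)) by lia. rewrite Nat.sub_diag. 
        assert (H := IHn n (le_n n)). rewrite Nat.sub_diag in H. simpl (fact 0) in *. simpl INR in *.
        assert (Hb : bn n n = 1).
        { apply (Rmult_eq_reg_r (INR (fact n))); [|apply not_0_INR, fact_neq_0]. lra. }
        rewrite Hb. ring.
      * assert (H1 := IHn k ltac:(lia)).
        assert (H2 := IHn (S k) ltac:(lia)).
        replace (n - k)%nat with (S (n - S k)) by lia.
        replace (n - k)%nat with (S (n - S k)) in H1 by lia.
        rewrite (fact_simpl k), (fact_simpl (n - S k)), (fact_simpl n), !mult_INR.
        rewrite (fact_simpl (n - S k)), mult_INR in H1.
        rewrite (fact_simpl k), mult_INR in H2.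
        assert (Hm : INR (S (n - S k)) = INR n - INR k) by (rewrite S_INR, minus_INR by lia; rewrite S_INR; ring).
        rewrite Hm in *. rewrite !S_INR in *.
        set (A := INR (fact k)) in *. set (B := INR (fact (n - S k))) in *. set (F := INR (fact n)) in *.
        set (u := bn n k) in *. set (v := bn n (S k)) in *.
        transitivity ((INR k + 1) * (u * A * ((INR n - INR k) * B)) + (INR n - INR k) * (v * ((INR k + 1) * A) * B)).
        ring. rewrite H1, H2. ring.
Qed.

Lemma g_shift (a : R) (g : nat -> R) (Hg : forall j, g (S j) = (INR j + a + 1) * g j) :
  forall k p, g (k + p)%nat = g k * rising (INR k + a + 1) p.
Proof.
  intros k p. induction p.
  - rewrite Nat.add_0_r. simpl. ring.
  - rewrite Nat.add_succ_r, Hg, IHp. simpl rising. rewrite plus_INR. ring.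
Qed.

Lemma g_fall (a : R) (g : nat -> R) (Hg : forall j, g (S j) = (INR j + a + 1) * g j) :
  forall d k, falling (INR (k + d) + a) d * g k = g (k + d)%nat.
Proof.
  induction d; intros k.
  - rewrite Nat.add_0_r. simpl. ring.
  - simpl falling. specialize (IHd (S k)).
    replace (k + S d)%nat with (S k + d)%nat by lia.
    rewrite <- IHd. rewrite Hg. rewrite !plus_INR, !S_INR. ring.
Qed.

Lemma lag_orth (a : R) (g : nat -> R) (Hg : forall j, g (S j) = (INR j + a + 1) * g j) (n p : nat) :
  (p < n)%nat ->
  sum_f_R0 (fun k => (-1)^k * gbinom (INR n + a) (n - k) / INR (fact k) * g (k + p)%nat) n = 0.
Proof.
  intros Hp.
  assert (Hf : forall k, INR (fact k) <> 0) by (intros; apply not_0_INR, fact_neq_0).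
  rewrite (sum_eq _ (fun k => ((-1)^k * bn n k * rising (INR k + a + 1) p) * (g n / INR (fact n)))).
  - rewrite <- scal_sum. fold (asum n (fun k => rising (INR k + a + 1) p)).
    rewrite asum_dlt. ring.
    apply (dlt_le (S p)); [|lia].
    apply (dlt_ext _ (fun k => rising (INR k + (a + 1)) p)); [intros; f_equal; ring|].
    apply dlt_rising.
  - intros k Hk. rewrite (g_shift a g Hg). unfold gbinom.
    assert (Hb := bn_fact n k Hk).
    assert (Hgn := g_fall a g Hg (n - k) k). replace (k + (n - k))%nat with n in Hgn by lia.
    rewrite <- Hgn. rewrite <- Hb. field. split; [auto| split; [auto|]]. intro H0. rewrite H0 in Hb. apply (Hf n). rewrite <- Hb. ring.
Qed.

Lemma sum_mul2 (A : nat -> R) n a b : a * sum_f_R0 A n * b = sum_f_R0 (fun i => a * A i * b) n.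
Proof. induction n; simpl; [|rewrite <- IHn]; ring. Qed.

Lemma sum_zero (A : nat -> R) n : (forall k, (k <= n)%nat -> A k = 0) -> sum_f_R0 A n = 0.
Proof.
  induction n; intros H; simpl. apply H; lia.
  rewrite IHn by (intros; apply H; lia). rewrite H by lia. ring.
Qed.

Lemma sum_delta (A : nat -> R) i d : (i <= d)%nat -> (forall k, (k <= d)%nat -> k <> i -> A k = 0) ->
  sum_f_R0 A d = A i.
Proof.
  induction d; intros Hi H.
  - simpl. replace i with 0%nat by lia. auto.
  - simpl. destruct (Nat.eq_dec i (S d)) as [->|Hne].
    + rewrite sum_zero. ring. intros k Hk. apply H; lia.
    + rewrite IHd by (try lia; intros; apply H; lia). rewrite (H (S d)) by lia. ring.
Qed.

Lemma sum_first (A : nat -> R) n : (forall k, (1 <= k)%nat -> A k = 0) -> sum_f_R0 A n = A 0%nat.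
Proof. intros H. apply sum_delta. lia. intros; apply H; lia. Qed.

Definition PS (d : nat) (c : nat -> R) (e : nat -> nat) (x : R) : R :=
  sum_f_R0 (fun k => c k * x ^ (e k)) d.

Lemma dlim_ext f g x l : (forall t, f t = g t) -> derivable_pt_lim f x l -> derivable_pt_lim g x l.
Proof.
  intros E H eps He. destruct (H eps He) as [d Hd]. exists d. intros h Hh Hh2.
  rewrite <- !E. apply Hd; auto.
Qed.

Lemma dPS d c e x : derivable_pt_lim (PS d c e) x (PS d (fun k => c k * INR (e k)) (fun k => pred (e k)) x).
Proof.
  induction d.
  - replace (PS 0 (fun k => c k * INR (e k)) (fun k => pred (e k)) x)
      with (c 0%nat * (INR (e 0%nat) * x ^ Init.Nat.pred (e 0%nat))) by (unfold PS; simpl; ring).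
    apply (dlim_ext (mult_real_fct (c 0%nat) (fun y => y ^ e 0%nat))). intros; unfold PS; reflexivity.
    apply derivable_pt_lim_scal, derivable_pt_lim_pow.
  - replace (PS (S d) (fun k => c k * INR (e k)) (fun k => pred (e k)) x)
      with (PS d (fun k => c k * INR (e k)) (fun k => pred (e k)) x + c (S d) * (INR (e (S d)) * x ^ Init.Nat.pred (e (S d)))) by (unfold PS; simpl; ring).
    apply (dlim_ext ((PS d c e) + mult_real_fct (c (S d)) (fun y => y ^ e (S d)))%F). intros; reflexivity.
    apply derivable_pt_lim_plus; auto.
    apply derivable_pt_lim_scal, derivable_pt_lim_pow.
Qed.

Lemma cont_PS d c e x : continuity_pt (PS d c e) x.
Proof. apply derivable_continuous_pt. exists (PS d (fun k => c k * INR (e k)) (fun k => pred (e k)) x). apply dPS. Qed.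

Lemma cont_ext f g x : (forall t, f t = g t) -> continuity_pt f x -> continuity_pt g x.
Proof.
  intros E H. unfold continuity_pt, continue_in, limit1_in, limit_in in *.
  intros eps He. destruct (H eps He) as [d [Hd Hd2]]. exists d. split; auto.
  intros y Hy. rewrite <- !E. apply Hd2; auto.
Qed.

Definition P1 d c x := PS d c (fun k => k) x.
Definition isP1 (d : nat) (g : R -> R) := exists c, forall x, g x = P1 d c x.

Lemma isP1_ext d f g : (forall x, f x = g x) -> isP1 d f -> isP1 d g.
Proof. intros E [c Hc]; exists c; intros; rewrite <- E; auto. Qed.

Lemma isP1_zero d : isP1 d (fun _ => 0).
Proof. exists (fun _ => 0). intros x. unfold P1, PS. symmetry. apply sum_zero. intros; ring. Qed.

Lemma isP1_plus d f g : isP1 d f -> isP1 d g -> isP1 d (fun x => f x + g x).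
Proof.
  intros [c1 H1] [c2 H2]. exists (fun k => c1 k + c2 k). intros x. rewrite H1, H2.
  unfold P1, PS. rewrite <- sum_plus. apply sum_eq. intros; ring.
Qed.

Lemma isP1_scal d f a : isP1 d f -> isP1 d (fun x => a * f x).
Proof.
  intros [c H]. exists (fun k => a * c k). intros x. rewrite H. unfold P1, PS.
  rewrite <- (Rmult_1_r (a * _)), sum_mul2. apply sum_eq. intros; ring.
Qed.

Lemma isP1_mon d i a : (i <= d)%nat -> isP1 d (fun x => a * x ^ i).
Proof.
  intros Hi. exists (fun k => if Nat.eqb k i then a else 0). intros x. unfold P1, PS.
  rewrite (sum_delta _ i d Hi). rewrite Nat.eqb_refl. auto.
  intros k _ Hk. apply Nat.eqb_neq in Hk. rewrite Hk. ring.
Qed.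

Lemma isP1_sum d (F : nat -> R -> R) m : (forall k, (k <= m)%nat -> isP1 d (F k)) ->
  isP1 d (fun x => sum_f_R0 (fun k => F k x) m).
Proof.
  induction m; intros H; simpl.
  - apply H; lia.
  - apply isP1_plus. apply IHm; intros; apply H; lia. apply H; lia.
Qed.

Lemma isP1_if d (F : R -> R) (b : bool) : (b = true -> isP1 d F) -> isP1 d (fun x => if b then F x else 0).
Proof. destruct b; intros H. apply H; auto. apply isP1_zero. Qed.

Lemma isP1_cont d g x : isP1 d g -> continuity_pt g x.
Proof. intros [c H]. apply (cont_ext (P1 d c)). intros; auto. apply cont_PS. Qed.

Lemma isP1_top d g : isP1 (S (S d)) g -> exists c a1 a2, forall x, g x = P1 d c x + a1 * x ^ (S d) + a2 * x ^ (S (S d)).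
Proof.
  intros [c H]. exists c, (c (S d)), (c (S (S d))). intros x. rewrite H. unfold P1, PS. simpl. ring.
Qed.

Lemma isP1_P1 d c : isP1 d (P1 d c).
Proof. exists c; auto. Qed.

Definition DS n (c : nat -> nat -> R) x y := sum_f_R0 (fun i => sum_f_R0 (fun j =>
              if Nat.leb (i + j) n then c i j * x ^ i * y ^ j else 0) n) n.

Lemma sum_mul_l (A : nat -> R) n a : a * sum_f_R0 A n = sum_f_R0 (fun i => a * A i) n.
Proof. induction n; simpl; [|rewrite <- IHn]; ring. Qed.
Lemma sum_mul_r (A : nat -> R) n a : sum_f_R0 A n * a = sum_f_R0 (fun i => A i * a) n.
Proof. induction n; simpl; [|rewrite <- IHn]; ring. Qed.

Lemma p2_ext n f g : (forall x y, f x y = g x y) -> poly2_le n f -> poly2_le n g.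
Proof. intros E [c H]; exists c; intros; rewrite <- E; auto. Qed.

Lemma p2_zero n : poly2_le n (fun _ _ => 0).
Proof.
  exists (fun _ _ => 0). intros x y. symmetry. apply sum_zero; intros. apply sum_zero; intros.
  destruct (Nat.leb _ _); ring.
Qed.

Lemma p2_plus n f g : poly2_le n f -> poly2_le n g -> poly2_le n (fun x y => f x y + g x y).
Proof.
  intros [c1 H1] [c2 H2]. exists (fun i j => c1 i j + c2 i j). intros x y. rewrite H1, H2.
  rewrite <- sum_plus. apply sum_eq; intros. rewrite <- sum_plus. apply sum_eq; intros.
  destruct (Nat.leb _ _); ring.
Qed.

Lemma p2_scal n f a : poly2_le n f -> poly2_le n (fun x y => a * f x y).
Proof.
  intros [c H]. exists (fun i j => a * c i j). intros x y. rewrite H.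
  rewrite <- (Rmult_1_r (a * _)), sum_mul2. apply sum_eq; intros.
  rewrite sum_mul2. apply sum_eq; intros.
  destruct (Nat.leb _ _); ring.
Qed.

Lemma p2_mon n i j a : (i + j <= n)%nat -> poly2_le n (fun x y => a * x ^ i * y ^ j).
Proof.
  intros Hij. exists (fun i' j' => if andb (Nat.eqb i' i) (Nat.eqb j' j) then a else 0).
  intros x y. symmetry. rewrite (sum_delta _ i n) by (try lia; intros k _ Hk;
    apply sum_zero; intros; apply Nat.eqb_neq in Hk; rewrite Hk; simpl; destruct (Nat.leb _ _); ring).
  rewrite (sum_delta _ j n) by (try lia; intros k _ Hk; apply Nat.eqb_neq in Hk;
    rewrite Nat.eqb_refl, Hk; simpl; destruct (Nat.leb _ _); ring).
  rewrite !Nat.eqb_refl. simpl. replace (Nat.leb (i + j) n) with true by (symmetry; apply Nat.leb_le; lia).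
  ring.
Qed.

Lemma p2_sum n (F : nat -> R -> R -> R) m : (forall k, (k <= m)%nat -> poly2_le n (F k)) ->
  poly2_le n (fun x y => sum_f_R0 (fun k => F k x y) m).
Proof.
  induction m; intros H; simpl.
  - apply H; lia.
  - apply p2_plus. apply IHm; intros; apply H; lia. apply H; lia.
Qed.

Lemma p2_if n (F : R -> R -> R) (b : bool) : (b = true -> poly2_le n F) -> poly2_le n (fun x y => if b then F x y else 0).
Proof. destruct b; intros H. apply H; auto. apply p2_zero. Qed.

Lemma p2_DS_expand n c x y : DS n c x y = sum_f_R0 (fun i => sum_f_R0 (fun j =>
              if Nat.leb (i + j) n then c i j * x ^ i * y ^ j else 0) n) n.
Proof. reflexivity. Qed.

Lemma p2_mono d e f : poly2_le d f -> (d <= e)%nat -> poly2_le e f.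
Proof.
  intros [c H] Hde. apply (p2_ext e (DS d c)). intros; rewrite H; reflexivity.
  unfold DS. apply p2_sum; intros i _. apply p2_sum; intros j _. apply p2_if. intros Hb.
  apply Nat.leb_le in Hb. apply p2_mon. lia.
Qed.

Lemma p2_mulmon d f a b : poly2_le d f -> poly2_le (d + a + b) (fun x y => x ^ a * y ^ b * f x y).
Proof.
  intros [c H]. apply (p2_ext _ (fun x y => sum_f_R0 (fun i => sum_f_R0 (fun j =>
              if Nat.leb (i + j) d then c i j * x ^ (i + a) * y ^ (j + b) else 0) d) d)).
  - intros x y. rewrite H. symmetry. rewrite sum_mul_l. apply sum_eq; intros.
    rewrite sum_mul_l. apply sum_eq; intros.
    destruct (Nat.leb _ _); [rewrite !pow_add|]; ring.
  - apply p2_sum; intros i _. apply p2_sum; intros j _. apply p2_if. intros Hb.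
    apply Nat.leb_le in Hb. apply p2_mon. lia.
Qed.

Lemma p2_mul d1 d2 f g : poly2_le d1 f -> poly2_le d2 g -> poly2_le (d1 + d2) (fun x y => f x y * g x y).
Proof.
  intros [c H] Hg. apply (p2_ext _ (fun x y => sum_f_R0 (fun i => sum_f_R0 (fun j =>
              if Nat.leb (i + j) d1 then c i j * (x ^ i * y ^ j * g x y) else 0) d1) d1)).
  - intros x y. rewrite H. symmetry. rewrite sum_mul_r. apply sum_eq; intros.
    rewrite sum_mul_r. apply sum_eq; intros.
    destruct (Nat.leb _ _); ring.
  - apply p2_sum; intros i _. apply p2_sum; intros j _. apply p2_if. intros Hb.
    apply Nat.leb_le in Hb. apply p2_scal. apply (p2_mono (d2 + i + j)). apply p2_mulmon; auto. lia.
Qed.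

Lemma P2_plus f g : poly2 f -> poly2 g -> poly2 (fun x y => f x y + g x y).
Proof.
  intros [d1 H1] [d2 H2]. exists (Nat.max d1 d2). apply p2_plus.
  apply (p2_mono d1); auto; lia. apply (p2_mono d2); auto; lia.
Qed.

Lemma P2_mul f g : poly2 f -> poly2 g -> poly2 (fun x y => f x y * g x y).
Proof. intros [d1 H1] [d2 H2]. exists (d1 + d2)%nat. apply p2_mul; auto. Qed.

Lemma P2_mon a i j : poly2 (fun x y => a * x ^ i * y ^ j).
Proof. exists (i + j)%nat. apply p2_mon. lia. Qed.

Lemma P2_ext f g : (forall x y, f x y = g x y) -> poly2 f -> poly2 g.
Proof. intros E [d H]. exists d. eapply p2_ext; eauto. Qed.

Lemma P2_sum (F : nat -> R -> R -> R) m : (forall k, (k <= m)%nat -> poly2 (F k)) ->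
  poly2 (fun x y => sum_f_R0 (fun k => F k x y) m).
Proof.
  induction m; intros H; simpl.
  - apply H; lia.
  - apply P2_plus. apply IHm; intros; apply H; lia. apply H; lia.
Qed.

Lemma P2_if (F : R -> R -> R) (b : bool) : (b = true -> poly2 F) -> poly2 (fun x y => if b then F x y else 0).
Proof. destruct b; intros H. apply H; auto. exists 0%nat. apply p2_zero. Qed.

Fixpoint gs (j : nat) (a b : R) : R := match j with O => 0 | S j' => a ^ j' + b * gs j' a b end.

Lemma gs_id j a b : a ^ j - b ^ j = (a - b) * gs j a b.
Proof.
  induction j; simpl. ring.
  replace (a * a ^ j - b * b ^ j) with ((a - b) * a ^ j + b * (a ^ j - b ^ j)) by ring.
  rewrite IHj. ring.
Qed.

Lemma gs_poly j : poly2 (fun x y => gs j y (x ^ 2)).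
Proof.
  induction j; simpl.
  - exists 0%nat. apply p2_zero.
  - apply P2_plus.
    + apply (P2_ext (fun x y => 1 * x ^ 0 * y ^ j)). intros; simpl; ring. apply P2_mon.
    + apply P2_mul; auto. apply (P2_ext (fun x y => 1 * x ^ 2 * y ^ 0)). intros; simpl; ring. apply P2_mon.
Qed.

Lemma division n P : poly2_le n P -> exists S, poly2 S /\ forall x y, P x y - P x (x ^ 2) = (y - x ^ 2) * S x y.
Proof.
  intros [c H].
  exists (fun x y => sum_f_R0 (fun i => sum_f_R0 (fun j =>
              if Nat.leb (i + j) n then c i j * x ^ i * gs j y (x ^ 2) else 0) n) n).
  split.
  - apply P2_sum; intros i _. apply P2_sum; intros j _. apply P2_if; intros _.
    apply P2_mul. apply (P2_ext (fun x y => c i j * x ^ i * y ^ 0)). intros; simpl; ring. apply P2_mon. apply gs_poly.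
  - intros x y. rewrite !H. rewrite <- minus_sum. rewrite sum_mul_l. apply sum_eq; intros i _.
    rewrite <- minus_sum. rewrite sum_mul_l. apply sum_eq; intros j _.
    destruct (Nat.leb _ _); [|ring].
    replace (c i j * x ^ i * y ^ j - c i j * x ^ i * (x ^ 2) ^ j) with (c i j * x ^ i * (y ^ j - (x ^ 2) ^ j)) by ring.
    rewrite gs_id. ring.
Qed.

Lemma curve_P1 n P : poly2_le n P -> isP1 (2 * n) (fun x => P x (x ^ 2)).
Proof.
  intros [c H]. apply (isP1_ext _ (fun x => sum_f_R0 (fun i => sum_f_R0 (fun j =>
              if Nat.leb (i + j) n then c i j * x ^ (i + 2 * j) else 0) n) n)).
  - intros x. rewrite H. apply sum_eq; intros. apply sum_eq; intros. destruct (Nat.leb _ _); [|ring].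
    rewrite pow_add, pow_mult. ring.
  - apply isP1_sum; intros i _. apply isP1_sum; intros j _. apply isP1_if; intros Hb.
    apply Nat.leb_le in Hb. apply isP1_mon. lia.
Qed.

Lemma lift m g : isP1 (2 * m) g -> exists Q, poly2_le m Q /\ forall x, Q x (x ^ 2) = g x.
Proof.
  intros [d H]. exists (fun x y => sum_f_R0 (fun k => d k * x ^ (k mod 2) * y ^ (k / 2)) (2 * m)).
  split.
  - apply p2_sum; intros k Hk. apply p2_mon.
    pose proof (Nat.div_mod_eq k 2). pose proof (Nat.mod_upper_bound k 2 ltac:(lia)). lia.
  - intros x. rewrite H. unfold P1, PS. apply sum_eq; intros k _.
    rewrite <- pow_mult, Rmult_assoc, <- pow_add. f_equal. f_equal.
    pose proof (Nat.div_mod_eq k 2). lia.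
Qed.

Lemma LI_val f l l' : LI f l -> l = l' -> LI f l'.
Proof. intros H ->; auto. Qed.

Lemma LI_sum_b (F : nat -> R -> R) (v : nat -> R) d :
  (forall k, (k <= d)%nat -> LI (F k) (v k)) -> LI (fun x => sum_f_R0 (fun k => F k x) d) (sum_f_R0 v d).
Proof.
  induction d; intros H; simpl.
  - apply (LI_ext (F 0%nat)). intros; reflexivity. apply H; lia.
  - apply (LI_plus (fun x => sum_f_R0 (fun k => F k x) d) (F (S d))).
    + apply IHd. intros; apply H; lia.
    + apply H; lia.
Qed.

Lemma LI_if (F : R -> R) v (b : bool) : (b = true -> LI F v) -> LI (fun x => if b then F x else 0) (if b then v else 0).
Proof. destruct b; intros H. apply H; auto. apply LI_zero. Qed.

Section WithM.
Variable M : R.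
Hypothesis HM : forall j, LI (mon j) (mom M j).

Lemma LI_PSmon d c e m :
  LI (fun x => PS d c e x * x ^ m * exp (- x ^ 2)) (sum_f_R0 (fun k => c k * mom M (e k + m)) d).
Proof.
  apply (LI_ext (fun x => sum_f_R0 (fun k => c k * mon (e k + m) x) d)).
  - intros x. symmetry. unfold PS. rewrite !sum_mul_r.
    apply sum_eq; intros. unfold mon. rewrite pow_add. ring.
  - apply LI_sum. intros k. apply LI_scal. apply HM.
Qed.

Lemma LI_mulPS g d c e (w : nat -> R) :
  (forall k, (k <= d)%nat -> LI (fun x => g x * x ^ (e k) * exp (- x ^ 2)) (w k)) ->
  LI (fun x => g x * PS d c e x * exp (- x ^ 2)) (sum_f_R0 (fun k => c k * w k) d).
Proof.
  intros H. apply (LI_ext (fun x => sum_f_R0 (fun k => c k * (g x * x ^ (e k) * exp (- x ^ 2))) d)).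
  - intros x. symmetry. unfold PS. rewrite sum_mul2. apply sum_eq; intros. ring.
  - apply LI_sum_b. intros k Hk. apply LI_scal. apply H; auto.
Qed.

Lemma LI_Q g d Q : poly2_le d Q ->
  (forall i j, (i + j <= d)%nat -> LI (fun x => g x * x ^ (i + 2 * j) * exp (- x ^ 2)) 0) ->
  LI (fun x => g x * Q x (x ^ 2) * exp (- x ^ 2)) 0.
Proof.
  intros [c H] Hg.
  apply (LI_ext (fun x => sum_f_R0 (fun i => sum_f_R0 (fun j =>
    if Nat.leb (i + j) d then c i j * (g x * x ^ (i + 2 * j) * exp (- x ^ 2)) else 0) d) d)).
  - intros x. symmetry. rewrite H. rewrite sum_mul2. apply sum_eq; intros. rewrite sum_mul2. apply sum_eq; intros.
    destruct (Nat.leb _ _); [|ring]. rewrite pow_add, pow_mult. ring.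
  - apply (LI_val _ (sum_f_R0 (fun i => sum_f_R0 (fun j => if Nat.leb (i + j) d then c i j * 0 else 0) d) d)).
    + apply LI_sum; intros i. apply LI_sum; intros j. apply LI_if; intros Hb.
      apply LI_scal. apply Hg. apply Nat.leb_le; auto.
    + apply sum_zero; intros. apply sum_zero; intros. destruct (Nat.leb _ _); ring.
Qed.

End WithM.

Lemma LI_integral_R f l : LI f l -> integral_R f l.
Proof.
  intros [H1 H2] eps He. destruct (H2 eps He) as [Mx HMx]. exists Mx. intros a b Ha Hb.
  exists (ex_RInt_Reals_0 f a b (H1 a b)). rewrite <- RInt_Reals. apply HMx; auto.
Qed.

Lemma integral_R_LI f l : (forall a b, ex_RInt f a b) -> integral_R f l -> LI f l.
Proof.
  intros H1 H2. split; auto. intros eps He. destruct (H2 eps He) as [Mx HMx]. exists Mx. intros a b Ha Hb.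
  destruct (HMx a b Ha Hb) as [pr Hpr]. rewrite <- RInt_Reals in Hpr. auto.
Qed.

Lemma cont_eps g c0 : continuity_pt g c0 -> forall eps, eps > 0 ->
  exists d, d > 0 /\ forall x, Rabs (x - c0) < d -> Rabs (g x - g c0) < eps.
Proof.
  intros Hc eps He. unfold continuity_pt, continue_in, limit1_in, limit_in in Hc.
  destruct (Hc eps He) as [d [Hd H]]. exists d. split; auto. intros x Hx.
  destruct (Req_dec x c0) as [->|Hne]. rewrite Rminus_diag, Rabs_R0; lra.
  apply H. split. split. exact I. auto. simpl. unfold R_dist. auto.
Qed.

Lemma pos_lemma g c0 l : continuity_pt g c0 -> g c0 <> 0 ->
  LI (fun x => g x * g x * exp (- x ^ 2)) l -> l > 0.
Proof.
  intros Hc Hg0 [Hex Hlim].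
  set (h := fun x => g x * g x * exp (- x ^ 2)).
  assert (Hg2 : 0 < Rabs (g c0) / 2) by (assert (0 < Rabs (g c0)) by (apply Rabs_pos_lt; auto); lra).
  destruct (cont_eps g c0 Hc _ Hg2) as [d [Hd Hnear]].
  set (m := exp (- (Rabs c0 + d) ^ 2)).
  set (kap := (Rabs (g c0) / 2) * (Rabs (g c0) / 2) * m).
  assert (Hm : 0 < m) by apply exp_pos.
  assert (Hkap : 0 < kap) by (unfold kap; apply Rmult_lt_0_compat; auto; apply Rmult_lt_0_compat; auto).
  assert (Hh0 : forall x, 0 <= h x).
  { intros x. unfold h. apply Rmult_le_pos. apply Rle_0_sqr. left; apply exp_pos. }
  assert (Hhk : forall x, Rabs (x - c0) < d -> kap <= h x).
  { intros x Hx. specialize (Hnear x Hx).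
    assert (Habs : Rabs (g c0) / 2 <= Rabs (g x)).
    { assert (Rabs (g c0) <= Rabs (g x) + Rabs (g x - g c0)).
      { replace (g c0) with (g x - (g x - g c0)) at 1 by ring.
        eapply Rle_trans; [apply Rabs_triang|]. rewrite Rabs_Ropp. lra. }
      lra. }
    assert (Hsq : (Rabs (g c0) / 2) * (Rabs (g c0) / 2) <= g x * g x).
    { assert (E : g x * g x = Rabs (g x) * Rabs (g x)).
      { rewrite <- Rabs_mult. symmetry. apply Rabs_pos_eq, Rle_0_sqr. }
      rewrite E. apply Rmult_le_compat; lra. }
    assert (Hex2 : m <= exp (- x ^ 2)).
    { assert (Hx1 : Rabs x <= Rabs c0 + d).
      { replace x with (c0 + (x - c0)) at 1 by ring. eapply Rle_trans; [apply Rabs_triang|]. lra. }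
      assert (Hx2 : x ^ 2 <= (Rabs c0 + d) ^ 2).
      { rewrite <- pow2_abs. apply pow_incr. split; [apply Rabs_pos| auto]. }
      unfold m. destruct (Req_dec (- (Rabs c0 + d) ^ 2) (- x ^ 2)) as [E|E].
      - rewrite E; lra.
      - left. apply exp_increasing. lra. }
    unfold h, kap. apply Rmult_le_compat; try lra.
    apply Rmult_le_pos; lra. }
  set (c1 := c0 - d / 2). set (c2 := c0 + d / 2).
  assert (Hmid : d * kap <= RInt h c1 c2).
  { apply Rle_trans with (RInt (fun _ => kap) c1 c2).
    - rewrite RInt_const. unfold scal; simpl; unfold mult; simpl. unfold c1, c2. lra.
    - apply RInt_le. unfold c1, c2; lra. apply ex_RInt_const. apply Hex.
      intros x Hx. apply Hhk. unfold c1, c2 in Hx. apply Rabs_def1; lra. }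
  destruct (Hlim (d * kap / 2)) as [Mx HMx].
  { apply Rmult_lt_0_compat; [apply Rmult_lt_0_compat|]; lra. }
  set (a := Rmin (-Mx) c1). set (b := Rmax Mx c2).
  assert (Ha : a <= - Mx) by apply Rmin_l. assert (Hb : Mx <= b) by apply Rmax_l.
  assert (Ha1 : a <= c1) by apply Rmin_r. assert (Hb2 : c2 <= b) by apply Rmax_r.
  specialize (HMx a b Ha Hb). fold h in HMx.
  assert (E1 : RInt h a b = RInt h a c1 + (RInt h c1 c2 + RInt h c2 b)).
  { rewrite <- (RInt_Chasles h a c1 b) by apply Hex. rewrite <- (RInt_Chasles h c1 c2 b) by apply Hex.
    unfold plus; simpl. reflexivity. }
  assert (P1 : 0 <= RInt h a c1) by (apply RInt_ge_0; auto; intros; apply Hh0).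
  assert (P2 : 0 <= RInt h c2 b) by (apply RInt_ge_0; auto; intros; apply Hh0).
  rewrite E1 in HMx. apply Rabs_def2 in HMx. lra.
Qed.

Definition lc n a k := (-1) ^ k * gbinom (INR n + a) (n - k) / INR (fact k).

Lemma lag_PS n a t : laguerre n a t = PS n (lc n a) (fun k => k) t.
Proof. unfold laguerre, PS, lc. apply sum_eq; intros. unfold Rdiv. ring. Qed.

Lemma lag_sq n a x : laguerre n a (x ^ 2) = PS n (lc n a) (fun k => (2 * k)%nat) x.
Proof. rewrite lag_PS. unfold PS. apply sum_eq; intros. rewrite pow_mult. reflexivity. Qed.

Lemma lag_sq_x m a x : x * laguerre m a (x ^ 2) = PS m (lc m a) (fun k => S (2 * k)) x.
Proof.
  rewrite lag_sq. unfold PS. rewrite sum_mul_l. apply sum_eq; intros. simpl pow. ring.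
Qed.

Lemma lag_cont n a t : continuity_pt (laguerre n a) t.
Proof. apply (cont_ext (PS n (lc n a) (fun k => k))). intros; rewrite lag_PS; auto. apply cont_PS. Qed.

Lemma lag_zero n a : laguerre n a 0 = gbinom (INR n + a) n.
Proof.
  unfold laguerre. rewrite sum_first. simpl. rewrite Nat.sub_0_r. field.
  intros k Hk. rewrite pow_i by lia. unfold Rdiv. ring.
Qed.

Lemma falling_nz r m : (forall j, (j < m)%nat -> r - INR j <> 0) -> falling r m <> 0.
Proof.
  induction m; intros H; simpl. lra.
  apply Rmult_integral_contrapositive. split. apply IHm; intros; apply H; lia. apply H; lia.
Qed.

Lemma gbinom_nz n a : a > -1 -> gbinom (INR n + a) n <> 0.
Proof.
  intros Ha. unfold gbinom. apply Rmult_integral_contrapositive. split.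
  - apply falling_nz. intros j Hj. assert (INR (S j) <= INR n) by (apply le_INR; lia).
    rewrite S_INR in H. lra.
  - apply Rinv_neq_0_compat, not_0_INR, fact_neq_0.
Qed.

Lemma lc_top n a : lc n a n <> 0.
Proof.
  unfold lc, gbinom. rewrite Nat.sub_diag. simpl falling. simpl fact. simpl INR.
  assert ((-1) ^ n <> 0) by (apply pow_nonzero; lra).
  assert (INR (fact n) <> 0) by (apply not_0_INR, fact_neq_0).
  unfold Rdiv. rewrite Rinv_1, !Rmult_1_r. apply Rmult_integral_contrapositive. split; auto.
  apply Rinv_neq_0_compat; auto.
Qed.

Lemma lag_d1 n a t : derivable_pt_lim (laguerre n a) t (PS n (fun k => lc n a k * INR k) pred t).
Proof.
  apply (dlim_ext (PS n (lc n a) (fun k => k))). intros; rewrite lag_PS; auto.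
  apply dPS.
Qed.

Lemma lag_d2 n a t : derivable_pt_lim (PS n (fun k => lc n a k * INR k) pred) t
   (PS n (fun k => lc n a k * INR k * INR (pred k)) (fun k => pred (pred k)) t).
Proof. apply dPS. Qed.

Lemma tel (u v : nat -> R) t N : u 0%nat = 0 -> (forall k, (k < N)%nat -> u (S k) + v k = 0) ->
  sum_f_R0 (fun k => u k * t ^ (pred k) + v k * t ^ k) N = v N * t ^ N.
Proof.
  intros H0 H. induction N.
  - simpl. rewrite H0. ring.
  - simpl sum_f_R0. rewrite IHN by (intros; apply H; lia).
    assert (E := H N ltac:(lia)). replace (u (S N)) with (- v N) by lra. simpl. ring.
Qed.

Lemma lag_ode n a t :
  t * PS n (fun k => lc n a k * INR k * INR (pred k)) (fun k => pred (pred k)) t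
  + (a + 1 - t) * PS n (fun k => lc n a k * INR k) pred t + INR n * laguerre n a t = 0.
Proof.
  rewrite lag_PS. unfold PS. rewrite !sum_mul_l. rewrite <- !sum_plus.
  rewrite (sum_eq _ (fun k => (lc n a k * INR k * (INR k + a)) * t ^ (pred k) + ((INR n - INR k) * lc n a k) * t ^ k)).
  2: { intros k _. destruct k as [|[|k]].
       - simpl. ring.
       - simpl. ring.
       - simpl pred. rewrite !S_INR. simpl. ring. }
  rewrite tel.
  - replace (INR n - INR n) with 0 by ring. ring.
  - simpl. ring.
  - intros k Hk. unfold lc, gbinom.
    set (q := (n - S k)%nat).
    replace (n - k)%nat with (S q) by (unfold q; lia).
    assert (En : INR n = INR q + INR k + 1) by (replace n with (q + S k)%nat by (unfold q; lia); rewrite plus_INR, S_INR; ring).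
    simpl falling. rewrite !fact_simpl, !mult_INR.
    assert (INR (fact q) <> 0) by (apply not_0_INR, fact_neq_0).
    assert (INR (fact k) <> 0) by (apply not_0_INR, fact_neq_0).
    assert (INR (S k) <> 0) by (apply not_0_INR; lia).
    assert (INR (S q) <> 0) by (apply not_0_INR; lia).
    rewrite En. rewrite !S_INR in *. simpl pow. field. split; auto.
Qed.

Lemma nz_near (phi : R -> R) : continuity_pt phi 0 -> phi 0 <> 0 -> exists x, x <> 0 /\ phi (x ^ 2) <> 0.
Proof.
  intros Hc H0. assert (Hp : 0 < Rabs (phi 0)) by (apply Rabs_pos_lt; auto).
  destruct (cont_eps phi 0 Hc _ Hp) as [d [Hd Hn]].
  set (x := Rmin 1 d / 2).
  assert (Hx0 : 0 < x) by (unfold x; assert (0 < Rmin 1 d) by (apply Rmin_glb_lt; lra); lra).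
  assert (Hx1 : x <= 1/2) by (unfold x; generalize (Rmin_l 1 d); lra).
  assert (Hxd : x < d) by (unfold x; generalize (Rmin_r 1 d); lra).
  exists x. split; [lra|]. intros Hz.
  assert (Habs : Rabs (x ^ 2 - 0) < d).
  { rewrite Rminus_0_r, Rabs_pos_eq by (apply pow_le; lra). simpl. nra. }
  specialize (Hn _ Habs). rewrite Hz in Hn. rewrite Rminus_0_l, Rabs_Ropp in Hn. lra.
Qed.

Lemma Y1c_PS n x : laguerre n (-(1/2)) (x ^ 2) = PS n (lc n (-(1/2))) (fun k => (2 * k)%nat) x.
Proof. apply lag_sq. Qed.

Section WithM.
Variable M : R.
Hypothesis HM : forall j, LI (mon j) (mom M j).

Lemma I1_zero n m : (m < 2 * n)%nat -> sum_f_R0 (fun k => lc n (-(1/2)) k * mom M (2 * k + m)) n = 0.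
Proof.
  intros Hm. destruct (Nat.Even_or_Odd m) as [[p Hp]|[p Hp]].
  - subst m. set (g := fun j => mom M (2 * j)).
    assert (Hg : forall j, g (S j) = (INR j + -(1/2) + 1) * g j).
    { intros j. unfold g. replace (2 * S j)%nat with (S (S (2 * j))) by lia.
      rewrite mom_SS_gen, mult_INR. simpl INR. field. }
    rewrite <- (lag_orth (-(1/2)) g Hg n p) by lia.
    apply sum_eq; intros k _. unfold lc, g. replace (2 * k + 2 * p)%nat with (2 * (k + p))%nat by lia. reflexivity.
  - subst m. apply sum_zero; intros k _. replace (2 * k + (2 * p + 1))%nat with (S (2 * (k + p))) by lia.
    rewrite mom_odd. ring.
Qed.

Lemma J_zero m' m : (m < 2 * m' + 1)%nat -> sum_f_R0 (fun k => lc m' (1/2) k * mom M (S (2 * k) + m)) m' = 0.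
Proof.
  intros Hm. destruct (Nat.Even_or_Odd m) as [[p Hp]|[p Hp]].
  - subst m. apply sum_zero; intros k _. replace (S (2 * k) + 2 * p)%nat with (S (2 * (k + p))) by lia.
    rewrite mom_odd. ring.
  - subst m. set (g := fun j => mom M (2 * S j)).
    assert (Hg : forall j, g (S j) = (INR j + 1/2 + 1) * g j).
    { intros j. unfold g. replace (2 * S (S j))%nat with (S (S (2 * S j))) by lia.
      rewrite mom_SS_gen, mult_INR. rewrite (S_INR j). replace (INR 2) with 2 by (simpl; ring). field. }
    rewrite <- (lag_orth (1/2) g Hg m' p) by lia.
    apply sum_eq; intros k _. unfold lc, g. replace (S (2 * k) + (2 * p + 1))%nat with (2 * S (k + p))%nat by lia. reflexivity.
Qed.

Lemma LI_Y1 n m : LI (fun x => laguerre n (-(1/2)) (x ^ 2) * x ^ m * exp (- x ^ 2))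
   (sum_f_R0 (fun k => lc n (-(1/2)) k * mom M (2 * k + m)) n).
Proof.
  apply (LI_ext (fun x => PS n (lc n (-(1/2))) (fun k => (2 * k)%nat) x * x ^ m * exp (- x ^ 2))).
  intros; rewrite lag_sq; auto. apply LI_PSmon; auto.
Qed.

Lemma LI_Y2 m' m : LI (fun x => x * laguerre m' (1/2) (x ^ 2) * x ^ m * exp (- x ^ 2))
   (sum_f_R0 (fun k => lc m' (1/2) k * mom M (S (2 * k) + m)) m').
Proof.
  apply (LI_ext (fun x => PS m' (lc m' (1/2)) (fun k => S (2 * k)) x * x ^ m * exp (- x ^ 2))).
  intros; rewrite lag_sq_x; auto. apply LI_PSmon; auto.
Qed.

Lemma Y1_orth n Q : (1 <= n)%nat -> poly2_le (n - 1) Q ->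
  LI (fun x => laguerre n (-(1/2)) (x ^ 2) * Q x (x ^ 2) * exp (- x ^ 2)) 0.
Proof.
  intros Hn HQ. apply (LI_Q (fun x => laguerre n (-(1/2)) (x ^ 2)) (n - 1) Q HQ).
  intros i j Hij. eapply LI_val. apply LI_Y1. apply I1_zero. lia.
Qed.

Lemma Y2_orth n Q : (1 <= n)%nat -> poly2_le (n - 1) Q ->
  LI (fun x => x * laguerre (n - 1) (1/2) (x ^ 2) * Q x (x ^ 2) * exp (- x ^ 2)) 0.
Proof.
  intros Hn HQ. apply (LI_Q (fun x => x * laguerre (n - 1) (1/2) (x ^ 2)) (n - 1) Q HQ).
  intros i j Hij. eapply LI_val. apply LI_Y2. apply J_zero. lia.
Qed.

Lemma Y12_orth n : (1 <= n)%nat ->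
  LI (fun x => laguerre n (-(1/2)) (x ^ 2) * (x * laguerre (n - 1) (1/2) (x ^ 2)) * exp (- x ^ 2)) 0.
Proof.
  intros Hn.
  apply (LI_ext (fun x => laguerre n (-(1/2)) (x ^ 2) * PS (n - 1) (lc (n - 1) (1/2)) (fun k => S (2 * k)) x * exp (- x ^ 2))).
  { intros; rewrite lag_sq_x; auto. }
  eapply LI_val. apply LI_mulPS with (w := fun k => sum_f_R0 (fun j => lc n (-(1/2)) j * mom M (2 * j + S (2 * k))) n).
  intros k Hk. apply LI_Y1.
  apply sum_zero. intros k Hk. rewrite I1_zero by lia. ring.
Qed.

Lemma Y1_norm n : exists l, LI (fun x => laguerre n (-(1/2)) (x ^ 2) * laguerre n (-(1/2)) (x ^ 2) * exp (- x ^ 2)) l /\ l > 0.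
Proof.
  eexists. split.
  - apply (LI_ext (fun x => laguerre n (-(1/2)) (x ^ 2) * PS n (lc n (-(1/2))) (fun k => (2 * k)%nat) x * exp (- x ^ 2))).
    { intros; rewrite lag_sq; auto. }
    apply LI_mulPS. intros k Hk. apply LI_Y1.
  - eapply pos_lemma with (c0 := 0) (g := fun x => laguerre n (-(1/2)) (x ^ 2)).
    + apply (cont_ext (PS n (lc n (-(1/2))) (fun k => (2 * k)%nat))). intros; rewrite lag_sq; auto. apply cont_PS.
    + replace (0 ^ 2) with 0 by ring. rewrite lag_zero. apply gbinom_nz. lra.
    + apply (LI_ext (fun x => laguerre n (-(1/2)) (x ^ 2) * PS n (lc n (-(1/2))) (fun k => (2 * k)%nat) x * exp (- x ^ 2))).
      { intros; rewrite lag_sq; auto. }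
      apply LI_mulPS. intros k Hk. apply LI_Y1.
Qed.

Lemma Y2_norm m' : exists l, LI (fun x => x * laguerre m' (1/2) (x ^ 2) * (x * laguerre m' (1/2) (x ^ 2)) * exp (- x ^ 2)) l /\ l > 0.
Proof.
  assert (HL : LI (fun x => x * laguerre m' (1/2) (x ^ 2) * (x * laguerre m' (1/2) (x ^ 2)) * exp (- x ^ 2))
     (sum_f_R0 (fun k => lc m' (1/2) k * sum_f_R0 (fun j => lc m' (1/2) j * mom M (S (2 * j) + S (2 * k))) m') m')).
  { apply (LI_ext (fun x => x * laguerre m' (1/2) (x ^ 2) * PS m' (lc m' (1/2)) (fun k => S (2 * k)) x * exp (- x ^ 2))).
    { intros; rewrite (lag_sq_x m' _ x); auto. }
    apply LI_mulPS. intros k Hk. apply LI_Y2. }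
  eexists. split. exact HL.
  destruct (nz_near (laguerre m' (1/2))) as [x0 [Hx0 Hl]].
  { apply lag_cont. }
  { rewrite lag_zero. apply gbinom_nz. lra. }
  eapply pos_lemma with (c0 := x0) (g := fun x => x * laguerre m' (1/2) (x ^ 2)).
  - apply (cont_ext (PS m' (lc m' (1/2)) (fun k => S (2 * k)))). intros; rewrite lag_sq_x; auto. apply cont_PS.
  - apply Rmult_integral_contrapositive; split; auto.
  - exact HL.
Qed.

Lemma LI_exists d1 d2 f1 f2 : isP1 d1 f1 -> isP1 d2 f2 -> exists l, LI (fun x => f1 x * f2 x * exp (- x ^ 2)) l.
Proof.
  intros [c1 H1] [c2 H2]. eexists.
  apply (LI_ext (fun x => f1 x * PS d2 c2 (fun k => k) x * exp (- x ^ 2))).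
  { intros; rewrite H2; auto. }
  apply LI_mulPS. intros k Hk.
  apply (LI_ext (fun x => PS d1 c1 (fun k => k) x * x ^ k * exp (- x ^ 2))).
  { intros; rewrite H1; auto. }
  apply LI_PSmon; auto.
Qed.

End WithM.

Lemma Y1_p2 n a : poly2_le n (fun x y => laguerre n a y).
Proof.
  apply (p2_ext _ (fun x y => sum_f_R0 (fun k => lc n a k * x ^ 0 * y ^ k) n)).
  - intros x y. rewrite lag_PS. unfold PS. apply sum_eq; intros. simpl. ring.
  - apply p2_sum; intros k Hk. apply p2_mon. lia.
Qed.

Lemma Y2_p2 n b : (1 <= n)%nat -> poly2_le n (fun x y => x * laguerre (n - 1) b y).
Proof.
  intros Hn. apply (p2_ext _ (fun x y => sum_f_R0 (fun k => lc (n - 1) b k * x ^ 1 * y ^ k) (n - 1))).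
  - intros x y. rewrite lag_PS. unfold PS. rewrite sum_mul_l. apply sum_eq; intros. simpl. ring.
  - apply p2_sum; intros k Hk. apply p2_mon. lia.
Qed.

Lemma Y1_top n a : (1 <= n)%nat ->
  isP1 (2 * (n - 1)) (fun x => laguerre n a (x ^ 2) - lc n a n * x ^ (S (S (2 * (n - 1))))).
Proof.
  intros Hn. destruct n as [|n']; [lia|]. replace (S n' - 1)%nat with n' by lia.
  apply (isP1_ext _ (fun x => sum_f_R0 (fun k => lc (S n') a k * x ^ (2 * k)) n')).
  - intros x. rewrite lag_sq. unfold PS.
    change (sum_f_R0 (fun k => lc (S n') a k * x ^ (2 * k)) (S n')) with
      (sum_f_R0 (fun k => lc (S n') a k * x ^ (2 * k)) n' + lc (S n') a (S n') * x ^ (2 * S n')).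
    replace (2 * S n')%nat with (S (S (2 * n'))) by lia. ring.
  - apply isP1_sum; intros k Hk. apply isP1_mon. lia.
Qed.

Lemma Y2_top m b : isP1 (2 * m) (fun x => x * laguerre m b (x ^ 2) - lc m b m * x ^ (S (2 * m))).
Proof.
  destruct m as [|m'].
  - apply (isP1_ext _ (fun _ => 0)). intros x. rewrite lag_sq_x. unfold PS. simpl. ring. apply isP1_zero.
  - apply (isP1_ext _ (fun x => sum_f_R0 (fun k => lc (S m') b k * x ^ (S (2 * k))) m')).
    + intros x. rewrite lag_sq_x. unfold PS.
      change (sum_f_R0 (fun k => lc (S m') b k * x ^ (S (2 * k))) (S m')) with
        (sum_f_R0 (fun k => lc (S m') b k * x ^ (S (2 * k))) m' + lc (S m') b (S m') * x ^ (S (2 * S m'))).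
      ring.
    + apply isP1_sum; intros k Hk. apply isP1_mon. lia.
Qed.

Lemma dlim_val f x l l' : derivable_pt_lim f x l -> l = l' -> derivable_pt_lim f x l'.
Proof. intros H ->; auto. Qed.

Theorem proposition4p2 (n : nat) (hn : (1 <= n)%nat) :
  let Y1 := fun x y : R => laguerre n (- (1/2)) y in
  let Y2 := fun x y : R => x * laguerre (n - 1) (1/2) y in
  (* Y1, Y2 belong to H_n and are orthogonal *)
  in_Hn n Y1 /\ in_Hn n Y2 /\ ip Y1 Y2 0 /\
  (* linearly independent modulo the ideal *)
  (forall a b : R, cong_par (fun x y => a * Y1 x y + b * Y2 x y) (fun _ _ => 0) ->
     a = 0 /\ b = 0) /\
  (* spanning H_n modulo the ideal *)
  (forall P, in_Hn n P -> exists a b : R,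
     cong_par P (fun x y => a * Y1 x y + b * Y2 x y)) /\
  (* both satisfy the PDE *)
  (forall u : R -> R -> R, (u = Y1 \/ u = Y2) ->
     exists ux uy uxy uyy : R -> R -> R,
       forall x y : R,
         derivable_pt_lim (fun t => u t y) x (ux x y) /\
         derivable_pt_lim (fun t => u x t) y (uy x y) /\
         derivable_pt_lim (fun t => uy t y) x (uxy x y) /\
         derivable_pt_lim (fun t => uy x t) y (uyy x y) /\
         x * uxy x y + y * uyy x y + (1/2 - y) * uy x y - x * ux x y
           = - INR n * u x y).
Proof.
  cbv zeta.
  destruct moments as [M HM].
  set (L1 := laguerre n (- (1/2))). set (L2 := laguerre (n - 1) (1/2)).
  assert (PY1 : poly2_le n (fun x y => L1 y)) by apply Y1_p2.
  assert (PY2 : poly2_le n (fun x y => x * L2 y)) by (apply Y2_p2; auto).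
  assert (O1 : forall Q, poly2_le (n - 1) Q -> LI (fun x => L1 (x ^ 2) * Q x (x ^ 2) * exp (- x ^ 2)) 0).
  { intros Q HQ. apply (Y1_orth M HM); auto. }
  assert (O2 : forall Q, poly2_le (n - 1) Q -> LI (fun x => x * L2 (x ^ 2) * Q x (x ^ 2) * exp (- x ^ 2)) 0).
  { intros Q HQ. apply (Y2_orth M HM); auto. }
  assert (L10 : L1 0 <> 0) by (unfold L1; rewrite lag_zero; apply gbinom_nz; lra).
  assert (L20 : exists x0, x0 <> 0 /\ L2 (x0 ^ 2) <> 0).
  { apply nz_near. apply lag_cont. unfold L2; rewrite lag_zero; apply gbinom_nz; lra. }
  split; [|split; [|split; [|split; [|split]]]].
  -
    destruct (Y1_norm M HM n) as [l [Hl Hlp]]. fold L1 in Hl.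
    split; [split|split].
    + exact PY1.
    + intros H. assert (H0 := O1 _ H). simpl in H0. assert (l = 0) by (eapply LI_unique; eauto). lra.
    + intros Q HQ. apply LI_integral_R. apply O1; auto.
    + exists l. split; auto. apply LI_integral_R. exact Hl.
  -
    destruct (Y2_norm M HM (n - 1)) as [l [Hl Hlp]]. fold L2 in Hl.
    split; [split|split].
    + exact PY2.
    + intros H. assert (H0 := O2 _ H). simpl in H0. assert (l = 0) by (eapply LI_unique; eauto). lra.
    + intros Q HQ. apply LI_integral_R. apply O2; auto.
    + exists l. split; auto. apply LI_integral_R. exact Hl.
  - apply LI_integral_R. apply (Y12_orth M HM); auto.
  -
    intros a b [S [_ HS]].
    assert (E1 : forall x, a * L1 (x ^ 2) + b * (x * L2 (x ^ 2)) = 0).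
    { intros x. specialize (HS x (x ^ 2)). cbv beta in HS. fold L1 L2 in HS. rewrite Rminus_diag, Rmult_0_l in HS. lra. }
    assert (Ha : a = 0).
    { specialize (E1 0). replace (0 ^ 2) with 0 in E1 by ring. rewrite Rmult_0_l, Rmult_0_r, Rplus_0_r in E1.
      apply Rmult_integral in E1. destruct E1; auto. contradiction. }
    split; auto. destruct L20 as [x0 [Hx0 Hl]]. specialize (E1 x0). rewrite Ha, Rmult_0_l, Rplus_0_l in E1.
    apply Rmult_integral in E1. destruct E1 as [|E]; auto.
    exfalso. apply Rmult_integral in E. destruct E; contradiction.
  -
    intros P [[HPn _] [HPo _]].
    assert (Hc := curve_P1 n P HPn).
    replace (2 * n)%nat with (S (S (2 * (n - 1)))) in Hc by lia.
    destruct (isP1_top _ _ Hc) as [c [a1 [a2 Hdec]]].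
    set (l1 := lc n (-(1/2)) n). set (l2 := lc (n - 1) (1/2) (n - 1)).
    assert (l1nz : l1 <> 0) by apply lc_top. assert (l2nz : l2 <> 0) by apply lc_top.
    destruct (Y1_top n (-(1/2)) hn) as [r1 Hr1]. fold L1 l1 in Hr1.
    destruct (Y2_top (n - 1) (1/2)) as [r2 Hr2]. fold L2 l2 in Hr2.
    set (a := a2 / l1). set (b := a1 / l2).
    set (g := fun x => P x (x ^ 2) - (a * L1 (x ^ 2) + b * (x * L2 (x ^ 2)))).
    assert (Hg : isP1 (2 * (n - 1)) g).
    { apply (isP1_ext _ (fun x => P1 (2 * (n - 1)) c x + (-a) * P1 (2 * (n - 1)) r1 x + (-b) * P1 (2 * (n - 1)) r2 x)).
      - intros x. unfold g. rewrite Hdec, <- Hr1, <- Hr2. unfold a, b. field. split; auto.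
      - apply isP1_plus. apply isP1_plus. apply isP1_P1. apply isP1_scal, isP1_P1. apply isP1_scal, isP1_P1. }
    destruct (lift (n - 1) g Hg) as [Q0 [HQ0 HQ0e]].
    assert (HPQ := HPo Q0 HQ0). unfold ip in HPQ.
    assert (Hex : forall a0 b0, ex_RInt (fun x => P x (x ^ 2) * Q0 x (x ^ 2) * exp (- x ^ 2)) a0 b0).
    { destruct (LI_exists M HM (2 * n) (2 * (n - 1)) (fun x => P x (x ^ 2)) (fun x => Q0 x (x ^ 2))) as [l0 [Hl0 _]].
      apply curve_P1; auto.
      apply (isP1_ext _ g). intros; rewrite HQ0e; auto. exact Hg.
      exact Hl0. }
    apply integral_R_LI in HPQ; [|exact Hex].
    assert (H1 := O1 Q0 HQ0). assert (H2 := O2 Q0 HQ0).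
    assert (Hgg : LI (fun x => g x * g x * exp (- x ^ 2)) 0).
    { apply (LI_val _ (0 + (-a) * 0 + (-b) * 0)); [|ring].
      apply (LI_ext (fun x => (P x (x ^ 2) * Q0 x (x ^ 2) * exp (- x ^ 2) + (-a) * (L1 (x ^ 2) * Q0 x (x ^ 2) * exp (- x ^ 2)))
         + (-b) * (x * L2 (x ^ 2) * Q0 x (x ^ 2) * exp (- x ^ 2)))).
      - intros x. rewrite HQ0e. unfold g. ring.
      - apply LI_plus. apply LI_plus. exact HPQ. apply LI_scal. exact H1. apply LI_scal. exact H2. }
    assert (Hg0 : forall x, g x = 0).
    { intros x. destruct (Req_dec (g x) 0) as [|Hne]; auto. exfalso.
      assert (0 > 0) by (eapply pos_lemma; [apply (isP1_cont _ _ x Hg)| exact Hne| exact Hgg]). lra. }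
    set (F := fun x y => P x y - (a * L1 y + b * (x * L2 y))).
    assert (HF : poly2_le n F).
    { apply (p2_ext _ (fun x y => P x y + (-1) * (a * L1 y + b * (x * L2 y)))). intros; unfold F; ring.
      apply p2_plus; auto. apply p2_scal. apply p2_plus; apply p2_scal; auto. }
    destruct (division n F HF) as [S [HS HSe]].
    exists a, b, S. split; auto. intros x y.
    specialize (HSe x y). specialize (Hg0 x). unfold F in HSe. unfold g in Hg0. cbv beta.
    rewrite Hg0, Rminus_0_r in HSe. exact HSe.
  -
    intros u [-> | ->].
    + exists (fun _ _ => 0), (fun x y => PS n (fun k => lc n (-(1/2)) k * INR k) pred y),
        (fun _ _ => 0), (fun x y => PS n (fun k => lc n (-(1/2)) k * INR k * INR (pred k)) (fun k => pred (pred k)) y).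
      intros x y. split; [|split; [|split; [|split]]].
      * apply (derivable_pt_lim_const (laguerre n (-(1/2)) y) x).
      * apply lag_d1.
      * apply (derivable_pt_lim_const (PS n (fun k => lc n (-(1/2)) k * INR k) pred y) x).
      * apply lag_d2.
      * assert (O := lag_ode n (-(1/2)) y).
        unfold L1 in *. revert O. generalize (PS n (fun k : nat => lc n (- (1 / 2)) k * INR k * INR (Init.Nat.pred k)) (fun k : nat => Init.Nat.pred (Init.Nat.pred k)) y) (PS n (fun k : nat => lc n (- (1 / 2)) k * INR k) Init.Nat.pred y) (laguerre n (- (1 / 2)) y). intros A B C O. replace (1/2 - y) with (- (1 / 2) + 1 - y) by field. lra.
    + set (D1 := PS (n - 1) (fun k => lc (n - 1) (1/2) k * INR k) pred).
      set (D2 := PS (n - 1) (fun k => lc (n - 1) (1/2) k * INR k * INR (pred k)) (fun k => pred (pred k))).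
      exists (fun x y => L2 y), (fun x y => x * D1 y), (fun x y => D1 y), (fun x y => x * D2 y).
      intros x y. split; [|split; [|split; [|split]]].
      * apply (dlim_val _ _ (L2 y * 1)); [|ring]. apply (dlim_ext (mult_real_fct (L2 y) id)).
        intros; unfold mult_real_fct, id; ring. apply derivable_pt_lim_scal, derivable_pt_lim_id.
      * apply (dlim_ext (mult_real_fct x L2)). intros; unfold mult_real_fct; reflexivity.
        apply derivable_pt_lim_scal. unfold L2, D1. apply lag_d1.
      * apply (dlim_val _ _ (D1 y * 1)); [|ring]. apply (dlim_ext (mult_real_fct (D1 y) id)).
        intros; unfold mult_real_fct, id; ring. apply derivable_pt_lim_scal, derivable_pt_lim_id.
      * apply (dlim_ext (mult_real_fct x D1)). intros; unfold mult_real_fct; reflexivity.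
        apply derivable_pt_lim_scal. unfold D1, D2. apply lag_d2.
      * assert (O := lag_ode (n - 1) (1/2) y). fold D1 D2 L2 in O.
        assert (En : INR n = INR (n - 1) + 1) by (rewrite <- S_INR; f_equal; lia).
        rewrite En. revert O. generalize (D1 y) (D2 y) (L2 y) (INR (n - 1)). intros A B C N O.
        replace (x * A + y * (x * B) + (1 / 2 - y) * (x * A) - x * C) with
          (x * (y * B + (1/2 + 1 - y) * A + N * C) - (N + 1) * (x * C)) by ring.
        rewrite O. ring.
Qed.
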